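(* Let $n\ge 2$. For every $K>0$ there exists a polynomial $f\in\mathbb{R}[z_1,\dots,z_n]$ such that $\mathbb{R}^n\setminus\mathcal{I}(f)$ has at least $K$ connected components that are bounded and strictly convex.
   Context: For $f\in\mathbb{C}[z_1,\dots,z_n]$, $\mathcal{V}(f)\subseteq\mathbb{C}^n$ denotes its complex zero set and the imaginary projection of $f$ is $\mathcal{I}(f)=\{\Im(\mathbf z):\mathbf z\in\mathcal V(f)\}\subseteq\mathbb{R}^n$, where $\Im$ is taken componentwise. A convex set is strictly convex if its boundary contains no nondegenerate line segment. *)

(* Defs.v *)
From Stdlib Require Import Reals List.
Open Scope R_scope.

Definition C : Type := (R * R)%type.
Definition Re (z : C) : R := fst z.
Definition Im (z : C) : R := snd z.
Definition C0 : C := (0, 0).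
Definition C1 : C := (1, 0).
Definition Cadd (z w : C) : C := (fst z + fst w, snd z + snd w).
Definition Cmul (z w : C) : C :=
  (fst z * fst w - snd z * snd w, fst z * snd w + snd z * fst w).
Definition RtoC (c : R) : C := (c, 0).
Fixpoint Cpow (z : C) (k : nat) : C :=
  match k with O => C1 | S k' => Cmul z (Cpow z k') end.

(** A polynomial is a finite list of terms (c, e), c a real coefficient and
    e an exponent vector; the term denotes c * prod_(i<n) z_i ^ (nth i e 0).
    Every element of R[z_1..z_n] is represented (exponents beyond index n
    are ignored). *)
Definition mpoly : Type := list (R * list nat).

Fixpoint eval_mono (k : nat) (e : list nat) (z : nat -> C) : C :=
  match k with
  | O => C1
  | S k' => Cmul (eval_mono k' e z) (Cpow (z k') (nth k' e O))
  end.

Definition eval_poly (n : nat) (f : mpoly) (z : nat -> C) : C :=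
  fold_right (fun t acc => Cadd (Cmul (RtoC (fst t)) (eval_mono n (snd t) z)) acc)
             C0 f.

Definition inRn (n : nat) (x : nat -> R) : Prop :=
  forall i, (n <= i)%nat -> x i = 0.

Definition set_Rn := (nat -> R) -> Prop.

Definition imag_proj (n : nat) (f : mpoly) : set_Rn :=
  fun y => inRn n y /\
    exists z : nat -> C, eval_poly n f z = C0 /\
      forall i, (i < n)%nat -> Im (z i) = y i.

Definition compl_imag_proj (n : nat) (f : mpoly) : set_Rn :=
  fun y => inRn n y /\ ~ imag_proj n f y.

(** * Euclidean topology on R^n (via sup-norm balls, same topology). *)
Definition rn_ball (n : nat) (x : nat -> R) (r : R) : set_Rn :=
  fun y => inRn n y /\ forall i, (i < n)%nat -> Rabs (y i - x i) < r.

Definition rn_open (n : nat) (U : set_Rn) : Prop :=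
  forall x, U x -> exists r, r > 0 /\ forall y, rn_ball n x r y -> U y.

Definition rn_connected (n : nat) (S : set_Rn) : Prop :=
  ~ exists U V : set_Rn,
      rn_open n U /\ rn_open n V /\
      (forall x, S x -> U x \/ V x) /\
      (exists x, S x /\ U x) /\ (exists x, S x /\ V x) /\
      (forall x, S x -> U x -> V x -> False).

Definition rn_component (n : nat) (S Cc : set_Rn) : Prop :=
  (exists x, Cc x) /\
  (forall x, Cc x -> S x) /\
  rn_connected n Cc /\
  (forall T : set_Rn, rn_connected n T -> (forall x, Cc x -> T x) ->
      (forall x, T x -> S x) -> forall x, T x -> Cc x).

Definition rn_bounded (n : nat) (S : set_Rn) : Prop :=
  exists M, forall x, S x -> forall i, (i < n)%nat -> Rabs (x i) <= M.

Definition comb (a b : nat -> R) (t : R) : nat -> R :=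
  fun i => (1 - t) * a i + t * b i.

Definition rn_convex (n : nat) (S : set_Rn) : Prop :=
  forall a b t, S a -> S b -> 0 <= t <= 1 -> S (comb a b t).

Definition rn_closure (n : nat) (S : set_Rn) : set_Rn :=
  fun x => inRn n x /\ forall r, r > 0 -> exists y, rn_ball n x r y /\ S y.

Definition rn_interior (n : nat) (S : set_Rn) : set_Rn :=
  fun x => inRn n x /\ exists r, r > 0 /\ forall y, rn_ball n x r y -> S y.

Definition rn_boundary (n : nat) (S : set_Rn) : set_Rn :=
  fun x => rn_closure n S x /\ ~ rn_interior n S x.

Definition rn_strictly_convex (n : nat) (S : set_Rn) : Prop :=
  rn_convex n S /\
  ~ exists a b, inRn n a /\ inRn n b /\ (exists i, (i < n)%nat /\ a i <> b i) /\
      forall t, 0 <= t <= 1 -> rn_boundary n S (comb a b t).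

(* Main.v *)
Require Import Defs.
From Stdlib Require Import Reals List Lra Lia Psatz Classical FunctionalExtensionality.
Import Defs.
Open Scope R_scope.

Fixpoint rsum (m : nat) (g : nat -> R) : R :=
  match m with O => 0 | S k => rsum k g + g k end.

Lemma rsum_ext m g h : (forall i, (i < m)%nat -> g i = h i) -> rsum m g = rsum m h.
Proof.
  induction m; simpl; intros H; [reflexivity|].
  rewrite IHm by (intros; apply H; lia). rewrite H by lia. reflexivity.
Qed.

Lemma rsum_nonneg m g : (forall i, (i<m)%nat -> 0 <= g i) -> 0 <= rsum m g.
Proof.
  induction m; simpl; intros H; [lra|].
  assert (0 <= rsum m g) by (apply IHm; intros; apply H; lia).
  assert (0 <= g m) by (apply H; lia). lra.
Qed.

Lemma rsum_ge_term m g i : (forall j, (j<m)%nat -> 0 <= g j) -> (i < m)%nat -> g i <= rsum m g.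
Proof.
  induction m; simpl; intros H Hi; [lia|].
  destruct (Nat.eq_dec i m) as [->|Hne].
  - assert (0 <= rsum m g) by (apply rsum_nonneg; intros; apply H; lia). lra.
  - assert (g i <= rsum m g) by (apply IHm; [intros; apply H; lia| lia]).
    assert (0 <= g m) by (apply H; lia). lra.
Qed.

Lemma rsum_zero m : rsum m (fun _ => 0 * 0) = 0.
Proof. induction m; simpl; [reflexivity| rewrite IHm; ring]. Qed.

Definition nrm2 n (a : nat -> R) := rsum n (fun i => a i * a i).
Definition dot n (a b : nat -> R) := rsum n (fun i => a i * b i).

Lemma expand2 m a b p q :
  rsum m (fun i => (p * a i + q * b i) * (p * a i + q * b i)) =
  p*p * nrm2 m a + 2*p*q * dot m a b + q*q * nrm2 m b.
Proof.
  unfold nrm2, dot; induction m; simpl; [ring|]. rewrite IHm. ring.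
Qed.

Lemma nrm2_nonneg m a : 0 <= nrm2 m a.
Proof. apply rsum_nonneg; intros; nra. Qed.

Lemma CS m a b : dot m a b * dot m a b <= nrm2 m a * nrm2 m b.
Proof.
  set (A := nrm2 m a); set (B := nrm2 m b); set (D := dot m a b).
  assert (Hq : forall l, 0 <= A - 2 * l * D + l * l * B).
  { intro l. assert (H := nrm2_nonneg m (fun i => 1 * a i + (- l) * b i)).
    unfold nrm2 in H at 1. rewrite expand2 in H. unfold A, B, D. nra. }
  assert (HA : 0 <= A) by apply nrm2_nonneg.
  assert (HB : 0 <= B) by apply nrm2_nonneg.
  destruct (Req_dec B 0) as [H0|H0].
  - destruct (Req_dec D 0) as [HD|HD].
    + rewrite HD, H0; nra.
    + specialize (Hq ((A + 1) / (2 * D))). rewrite H0 in Hq.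
      replace (A - 2 * ((A + 1) / (2 * D)) * D + (A + 1) / (2 * D) * ((A + 1) / (2 * D)) * 0) with (-1) in Hq by (field; exact HD). lra.
  - specialize (Hq (D / B)).
    assert (HBp : 0 < B) by lra.
    assert (0 <= A * B - D * D).
    { replace (A * B - D * D) with (B * (A - 2 * (D / B) * D + D / B * (D / B) * B)) by (field; lra).
      nra. }
    lra.
Qed.

Ltac csolve := repeat match goal with [ w : C |- _ ] => destruct w end;
  unfold Cadd, Cmul, RtoC, C1, C0; simpl; f_equal; ring.

Lemma Cmul_1_l w : Cmul C1 w = w. Proof. csolve. Qed.
Lemma Cmul_1_r w : Cmul w C1 = w. Proof. csolve. Qed.
Lemma Cmul_assoc a b c : Cmul (Cmul a b) c = Cmul a (Cmul b c). Proof. csolve. Qed.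
Lemma Cmul4 a b c d : Cmul (Cmul a b) (Cmul c d) = Cmul (Cmul a c) (Cmul b d). Proof. csolve. Qed.
Lemma Cadd_0_l w : Cadd C0 w = w. Proof. csolve. Qed.
Lemma Cadd_assoc a b c : Cadd (Cadd a b) c = Cadd a (Cadd b c). Proof. csolve. Qed.

Lemma Cpow_add w a b : Cpow w (a + b) = Cmul (Cpow w a) (Cpow w b).
Proof.
  induction a; simpl. - rewrite Cmul_1_l; reflexivity.
  - rewrite IHa, Cmul_assoc; reflexivity.
Qed.

Lemma Cmul_eq0 a b : Cmul a b = C0 -> a = C0 \/ b = C0.
Proof.
  destruct a as [a1 a2], b as [b1 b2]; unfold Cmul, C0; simpl; intros H.
  injection H; intros H2 H1.
  destruct (Req_dec a1 0), (Req_dec a2 0).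
  - left; subst; reflexivity.
  - right. assert (b1 = 0 /\ b2 = 0) as [-> ->].
    { assert ((a1*a1+a2*a2)*(b1*b1+b2*b2) = 0) by nra.
      assert (a1*a1+a2*a2 > 0) by nra. split; nra. }
    reflexivity.
  - right. assert (b1 = 0 /\ b2 = 0) as [-> ->].
    { assert ((a1*a1+a2*a2)*(b1*b1+b2*b2) = 0) by nra.
      assert (a1*a1+a2*a2 > 0) by nra. split; nra. }
    reflexivity.
  - right. assert (b1 = 0 /\ b2 = 0) as [-> ->].
    { assert ((a1*a1+a2*a2)*(b1*b1+b2*b2) = 0) by nra.
      assert (a1*a1+a2*a2 > 0) by nra. split; nra. }
    reflexivity.
Qed.

Lemma Cmul_0_l b : Cmul C0 b = C0. Proof. csolve. Qed.
Lemma Cmul_0_r b : Cmul b C0 = C0. Proof. csolve. Qed.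

Fixpoint addexp (e1 e2 : list nat) : list nat :=
  match e1, e2 with
  | nil, _ => e2
  | _, nil => e1
  | a :: r, b :: s => (a + b)%nat :: addexp r s
  end.

Lemma nth_addexp e1 e2 i : nth i (addexp e1 e2) O = (nth i e1 O + nth i e2 O)%nat.
Proof.
  revert e2 i; induction e1; intros e2 i; destruct e2; destruct i; simpl; try lia; auto.
  all: destruct i; simpl; lia.
Qed.

Lemma eval_mono_add k e1 e2 z :
  eval_mono k (addexp e1 e2) z = Cmul (eval_mono k e1 z) (eval_mono k e2 z).
Proof.
  induction k; simpl. - csolve.
  - rewrite IHk, nth_addexp, Cpow_add. apply Cmul4.
Qed.

Lemma eval_app n l1 l2 z : eval_poly n (l1 ++ l2) z = Cadd (eval_poly n l1 z) (eval_poly n l2 z).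
Proof.
  unfold eval_poly. rewrite fold_right_app. induction l1; simpl.
  - rewrite Cadd_0_l; reflexivity.
  - rewrite IHl1, Cadd_assoc; reflexivity.
Qed.

Definition pmul (f g : mpoly) : mpoly :=
  flat_map (fun t => map (fun u => (fst t * fst u, addexp (snd t) (snd u))) g) f.

Lemma eval_map n c e g z :
  eval_poly n (map (fun u => (c * fst u, addexp e (snd u))) g) z =
  Cmul (Cmul (RtoC c) (eval_mono n e z)) (eval_poly n g z).
Proof.
  induction g as [|[c' e'] g IH]; simpl.
  - csolve.
  - unfold eval_poly in *; simpl. rewrite IH, eval_mono_add.
    generalize (eval_mono n e z) (eval_mono n e' z)
      (fold_right (fun t acc => Cadd (Cmul (RtoC (fst t)) (eval_mono n (snd t) z)) acc) C0 g).
    intros; csolve.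
Qed.

Lemma eval_pmul n f g z : eval_poly n (pmul f g) z = Cmul (eval_poly n f z) (eval_poly n g z).
Proof.
  induction f as [|[c e] f IH]; simpl.
  - csolve.
  - unfold pmul in *; simpl. rewrite eval_app, eval_map, IH.
    unfold eval_poly; simpl.
    generalize (eval_mono n e z)
      (fold_right (fun t acc => Cadd (Cmul (RtoC (fst t)) (eval_mono n (snd t) z)) acc) C0 g)
      (fold_right (fun t acc => Cadd (Cmul (RtoC (fst t)) (eval_mono n (snd t) z)) acc) C0 f).
    intros; csolve.
Qed.

Definition ex (i d : nat) : list nat := repeat O i ++ d :: nil.

Lemma nth_ex i d j : nth j (ex i d) O = if Nat.eqb j i then d else O.
Proof.
  unfold ex. revert j; induction i; intros j; destruct j; simpl; auto.
  destruct j; reflexivity.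
Qed.

Lemma eval_mono_ex k i d z : eval_mono k (ex i d) z = if Nat.ltb i k then Cpow (z i) d else C1.
Proof.
  induction k as [|k IHk]; simpl.
  - destruct (Nat.ltb_spec i 0); [lia|reflexivity].
  - rewrite IHk, nth_ex.
    destruct (Nat.eqb_spec k i); [subst|].
    + destruct (Nat.ltb_spec i i); [lia|]. destruct (Nat.ltb_spec i (S i)); [|lia].
      apply Cmul_1_l.
    + simpl. rewrite Cmul_1_r.
      destruct (Nat.ltb_spec i k), (Nat.ltb_spec i (S k)); auto; lia.
Qed.

Lemma eval_mono_nil k z : eval_mono k nil z = C1.
Proof.
  induction k; simpl; [reflexivity|]. rewrite IHk. destruct k; simpl; apply Cmul_1_r.
Qed.

Definition sqsum_poly (c : R) (m : nat) : mpoly := map (fun i => (c, ex i 2)) (seq 0 m).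

Definition Xr (z : nat -> C) : nat -> R := fun i => fst (z i).
Definition Yr (z : nat -> C) : nat -> R := fun i => snd (z i).

Lemma eval_sqsum n c m z : (m <= n)%nat ->
  eval_poly n (sqsum_poly c m) z =
  (c * (nrm2 m (Xr z) - nrm2 m (Yr z)), c * (2 * dot m (Xr z) (Yr z))).
Proof.
  induction m; intros Hm.
  - unfold nrm2, dot; simpl. unfold C0; f_equal; ring.
  - unfold sqsum_poly; rewrite seq_S, map_app, eval_app. fold (sqsum_poly c m).
    rewrite IHm by lia. unfold eval_poly; simpl. rewrite eval_mono_ex.
    destruct (Nat.ltb_spec m n); [|lia]. simpl.
    unfold nrm2, dot, Xr, Yr; simpl. destruct (z m) as [p q].
    unfold Cadd, Cmul, RtoC, C1, C0; simpl; f_equal; ring.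
Qed.

Definition ee (K : nat) : R := / (2 * (1 + INR K * INR K)).
Definition RR (K : nat) : R := 4 * (1 + INR K * INR K) + 1.
Definition la (j : nat) : R := 2 * INR j + 1.
Definition ell (j : nat) (v : nat -> R) : R := la j * v O + -2 * v 1%nat.

Definition ballp (n K : nat) : mpoly := (RR K, nil) :: sqsum_poly 1 n.

Lemma eval_ballp n K z : eval_poly n (ballp n K) z =
  (RR K + (nrm2 n (Xr z) - nrm2 n (Yr z)), 2 * dot n (Xr z) (Yr z)).
Proof.
  unfold ballp. change ((RR K, nil) :: sqsum_poly 1 n) with (((RR K, nil) :: nil) ++ sqsum_poly 1 n).
  rewrite eval_app, eval_sqsum by lia. unfold eval_poly; simpl. rewrite eval_mono_nil.
  unfold Cadd, Cmul, RtoC, C1, C0; simpl; f_equal; ring.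
Qed.

Definition Lp (j : nat) : mpoly := (la j, ex 0 1) :: (-2, ex 1 1) :: nil.

Lemma eval_Lp n j z : (2 <= n)%nat -> eval_poly n (Lp j) z = (ell j (Xr z), ell j (Yr z)).
Proof.
  intros Hn. unfold eval_poly; simpl. rewrite !eval_mono_ex.
  destruct (Nat.ltb_spec 0 n); [|lia]. destruct (Nat.ltb_spec 1 n); [|lia]. simpl.
  unfold ell, Xr, Yr. destruct (z O) as [p q], (z 1%nat) as [p' q'].
  unfold Cadd, Cmul, RtoC, C1, C0; simpl; f_equal; ring.
Qed.

Definition hp (n K j : nat) : mpoly := pmul (Lp j) (Lp j) ++ ((1, nil) :: sqsum_poly (- ee K) n).

Lemma eval_hp n K j z : (2 <= n)%nat -> eval_poly n (hp n K j) z =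
  (ell j (Xr z) * ell j (Xr z) - ell j (Yr z) * ell j (Yr z) + 1 - ee K * (nrm2 n (Xr z) - nrm2 n (Yr z)),
   2 * ell j (Xr z) * ell j (Yr z) - ee K * (2 * dot n (Xr z) (Yr z))).
Proof.
  intros Hn. unfold hp. rewrite eval_app, eval_pmul, eval_Lp by lia.
  change ((1, nil) :: sqsum_poly (- ee K) n) with (((1, nil) :: nil) ++ sqsum_poly (- ee K) n).
  rewrite eval_app, eval_sqsum by lia. unfold eval_poly; simpl. rewrite eval_mono_nil.
  unfold Cadd, Cmul, RtoC, C1, C0; simpl; f_equal; ring.
Qed.

Fixpoint prodh (n K m : nat) : mpoly :=
  match m with O => (1, nil) :: nil | S m' => pmul (hp n K m') (prodh n K m') end.

Lemma prodh_zero n K m z : eval_poly n (prodh n K m) z = C0 ->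
  exists j, (j < m)%nat /\ eval_poly n (hp n K j) z = C0.
Proof.
  induction m; cbn [prodh].
  - unfold eval_poly; simpl. rewrite eval_mono_nil. unfold Cadd, Cmul, RtoC, C1, C0; simpl.
    intros H; injection H; intros; lra.
  - rewrite eval_pmul. intros H; apply Cmul_eq0 in H as [H|H].
    + exists m; split; [lia|exact H].
    + destruct (IHm H) as [j [Hj Hj']]. exists j; split; [lia|exact Hj'].
Qed.

Lemma prodh_zero' n K m z j : (j < m)%nat -> eval_poly n (hp n K j) z = C0 ->
  eval_poly n (prodh n K m) z = C0.
Proof.
  induction m; intros Hj H; [lia|]. cbn [prodh]. rewrite eval_pmul.
  destruct (Nat.eq_dec j m) as [->|Hne].
  - rewrite H; apply Cmul_0_l.
  - rewrite IHm by (auto; lia). apply Cmul_0_r.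
Qed.

Definition fpoly (n K : nat) : mpoly := pmul (ballp n K) (prodh n K K).

Lemma prod_ge (a b e A B D : R) : 0 < a -> 0 < b -> e > 0 -> 0 <= A -> 0 <= B ->
  a*a - 1 - e*A >= 0 -> b*b - 1 - e*B >= 0 -> D*D <= A*B -> 0 <= A - 2*D + B ->
  (1 + e*A)*(1+e*B) - (1+e*D)*(1+e*D) >= 0 -> a*b > 0 /\ (a*b)*(a*b) >= (1+e*D)*(1+e*D).
Proof.
  intros. split; [nra|].
  assert (a*a >= 1+e*A) by lra. assert (b*b >= 1+e*B) by lra.
  assert (0 <= 1 + e*A) by nra. assert (0 <= 1 + e*B) by nra.
  assert ((a*a)*(b*b) >= (1+e*A)*(1+e*B)) by nra. nra.
Qed.

Lemma sq_ge (p q : R) : p > 0 -> p*p >= q*q -> p >= q.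
Proof. intros. destruct (Rle_or_lt q 0); [lra|]. nra. Qed.

Lemma gap (e A B D : R) :
  (1 + e*A)*(1+e*B) - (1+e*D)*(1+e*D) = e*(A - 2*D + B) + e*e*(A*B - D*D).
Proof. ring. Qed.

Lemma key_ineq (s t a b A B D e: R) : 0 <= s -> 0 <= t -> s + t = 1 -> 0 < a -> 0 < b -> e > 0 ->
  a*a - 1 - e*A > 0 -> b*b - 1 - e*B > 0 -> D*D <= A*B -> 0 <= A - 2*D + B -> 0 <= A -> 0 <= B ->
  (s*a+t*b)*(s*a+t*b) - 1 - e*(s*s*A + 2*s*t*D + t*t*B) > 0.
Proof.
  intros.
  assert (Hg : (1 + e*A)*(1+e*B) - (1+e*D)*(1+e*D) >= 0).
  { rewrite gap. assert (0 <= e*(A-2*D+B)) by nra. assert (0 <= e*e*(A*B-D*D)) by nra. lra. }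
  destruct (prod_ge a b e A B D) as [Hp1 Hp2]; auto; try lra.
  assert (Hab : a*b >= 1 + e*D) by (apply sq_ge; auto).
  assert (s*s*(a*a) + t*t*(b*b) > s*s*(1+e*A) + t*t*(1+e*B)).
  { destruct (Req_dec s 0). - subst. assert (t = 1) by lra. subst. nra.
    - assert (s > 0) by lra. assert (s*s > 0) by nra. assert (t*t >= 0) by nra. nra. }
  assert (2*s*t*(a*b) >= 2*s*t*(1+e*D)) by (assert (0 <= 2*s*t) by nra; nra).
  replace ((s*a+t*b)*(s*a+t*b)) with (s*s*(a*a) + t*t*(b*b) + 2*s*t*(a*b)) by ring.
  replace 1 with ((s+t)*(s+t)) at 1 by (match goal with H: s + t = 1 |- _ => rewrite H end; ring).
  nra.
Qed.

Lemma key_mid (a b A B D e: R) : 0 <= a -> 0 <= b -> e > 0 ->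
  a*a - 1 - e*A >= 0 -> b*b - 1 - e*B >= 0 -> D*D <= A*B -> 0 < A - 2*D + B -> 0 <= A -> 0 <= B ->
  ((a+b)/2)*((a+b)/2) - 1 - e*(A/4 + 2*D/4 + B/4) > 0.
Proof.
  intros.
  assert (Hg : (1 + e*A)*(1+e*B) - (1+e*D)*(1+e*D) > 0).
  { rewrite gap. assert (0 < e*(A-2*D+B)) by nra. assert (0 <= e*e*(A*B-D*D)) by nra. lra. }
  assert (a*a >= 1+e*A) by lra. assert (b*b >= 1+e*B) by lra.
  assert (0 < 1 + e*A) by nra. assert (0 < 1 + e*B) by nra.
  assert (a > 0) by nra. assert (b > 0) by nra.
  assert ((a*a)*(b*b) >= (1+e*A)*(1+e*B)) by nra.
  assert (Hab : a*b > 1 + e*D).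
  { assert (a*b > 0) by (apply Rmult_lt_0_compat; lra).
    destruct (Rle_or_lt (1+e*D) 0) as [Hl|Hl]; [lra|].
    apply Rnot_le_lt; intro Hc.
    assert ((a*b)*(a*b) <= (1+e*D)*(1+e*D)) by (apply Rmult_le_compat; lra).
    lra. }
  nra.
Qed.

Lemma hyp_contra Lx Ly X Y D e : e > 0 -> 0 <= X -> 0 <= Y -> D*D <= X*Y ->
  Lx*Lx - Ly*Ly + 1 - e*(X-Y) = 0 -> 2*Lx*Ly - e*(2*D) = 0 -> Ly*Ly - 1 - e*Y > 0 -> False.
Proof.
  intros He HX HY HCS H1 H2 H3.
  assert (HLx : Lx*Lx - e*X > 0) by lra.
  assert (HLL : Lx*Ly = e*D) by lra.
  assert (Hsq : (Lx*Lx)*(Ly*Ly) = e*e*(D*D)) by (replace ((Lx*Lx)*(Ly*Ly)) with ((Lx*Ly)*(Lx*Ly)) by ring; rewrite HLL; ring).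
  assert (HeX : 0 <= e*X) by nra. assert (HeY : 0 <= e*Y) by nra.
  assert (Ly*Ly > 0) by lra.
  assert ((Lx*Lx)*(Ly*Ly) > (e*X)*(Ly*Ly)) by nra.
  assert ((e*X)*(Ly*Ly) >= (e*X)*(e*Y)) by nra.
  assert (e*e*(D*D) <= e*e*(X*Y)) by (apply Rmult_le_compat_l; nra).
  nra.
Qed.

Definition close n (x y : nat -> R) r := forall i, (i < n)%nat -> Rabs (y i - x i) < r.

Definition cont n (F : (nat -> R) -> R) x :=
  forall eps, eps > 0 -> exists r, r > 0 /\ forall y, close n x y r -> Rabs (F y - F x) < eps.

Lemma cont_const n c x : cont n (fun _ => c) x.
Proof. intros eps He; exists 1; split; [lra|]; intros; rewrite Rminus_diag, Rabs_R0; lra. Qed.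

Lemma cont_coord n i x : (i < n)%nat -> cont n (fun y => y i) x.
Proof. intros Hi eps He; exists eps; split; [lra|]; intros y Hy; apply Hy, Hi. Qed.

Lemma close_min n x y r1 r2 : close n x y (Rmin r1 r2) -> close n x y r1 /\ close n x y r2.
Proof.
  intros H; split; intros i Hi; specialize (H i Hi);
  [pose proof (Rmin_l r1 r2)|pose proof (Rmin_r r1 r2)]; lra.
Qed.

Lemma cont_plus n F G x : cont n F x -> cont n G x -> cont n (fun y => F y + G y) x.
Proof.
  intros HF HG eps He.
  destruct (HF (eps/2)) as [r1 [Hr1 H1]]; [lra|].
  destruct (HG (eps/2)) as [r2 [Hr2 H2]]; [lra|].
  exists (Rmin r1 r2); split; [apply Rmin_pos; auto|].
  intros y Hy; apply close_min in Hy as [Hy1 Hy2].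
  specialize (H1 y Hy1); specialize (H2 y Hy2).
  replace (F y + G y - (F x + G x)) with ((F y - F x) + (G y - G x)) by ring.
  pose proof (Rabs_triang (F y - F x) (G y - G x)). lra.
Qed.

Lemma cont_mult n F G x : cont n F x -> cont n G x -> cont n (fun y => F y * G y) x.
Proof.
  intros HF HG eps He.
  set (M := Rabs (F x) + Rabs (G x) + 1).
  assert (HM : M >= 1) by (unfold M; pose proof (Rabs_pos (F x)); pose proof (Rabs_pos (G x)); lra).
  set (d := Rmin 1 (eps / M)).
  assert (Hd : d > 0) by (apply Rmin_pos; [lra| apply Rdiv_lt_0_compat; lra]).
  assert (Hd1 : d <= 1) by apply Rmin_l.
  assert (HdM : d * M <= eps).
  { assert (d <= eps / M) by apply Rmin_r.
    apply Rmult_le_compat_r with (r := M) in H; [|lra].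
    unfold Rdiv in H; rewrite Rmult_assoc, Rinv_l, Rmult_1_r in H; lra. }
  destruct (HF d Hd) as [r1 [Hr1 H1]].
  destruct (HG d Hd) as [r2 [Hr2 H2]].
  exists (Rmin r1 r2); split; [apply Rmin_pos; auto|].
  intros y Hy; apply close_min in Hy as [Hy1 Hy2].
  specialize (H1 y Hy1); specialize (H2 y Hy2).
  set (u := F y - F x) in *; set (v := G y - G x) in *.
  replace (F y * G y - F x * G x) with (u * v + F x * v + G x * u) by (unfold u, v; ring).
  pose proof (Rabs_triang (u*v + F x * v) (G x * u)).
  pose proof (Rabs_triang (u*v) (F x * v)).
  rewrite !Rabs_mult in *.
  pose proof (Rabs_pos u); pose proof (Rabs_pos v);
  pose proof (Rabs_pos (F x)); pose proof (Rabs_pos (G x)).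
  assert (Rabs u * Rabs v <= Rabs u) by nra.
  assert (Rabs (F x) * Rabs v <= Rabs (F x) * d) by nra.
  assert (Rabs (G x) * Rabs u <= Rabs (G x) * d) by nra.
  unfold M in HdM. nra.
Qed.

Lemma cont_rsum n m (g : nat -> (nat -> R) -> R) x :
  (forall i, (i < m)%nat -> cont n (g i) x) -> cont n (fun y => rsum m (fun i => g i y)) x.
Proof.
  induction m; intros H; simpl.
  - apply cont_const.
  - apply cont_plus; [apply IHm; intros; apply H; lia | apply H; lia].
Qed.

Lemma cont_nrm2 n x : cont n (fun y => nrm2 n y) x.
Proof.
  unfold nrm2. apply (cont_rsum n n (fun i y => y i * y i)).
  intros i Hi; apply cont_mult; apply cont_coord; auto.
Qed.

Lemma cont_ell n j x : (2 <= n)%nat -> cont n (fun y => ell j y) x.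
Proof.
  intros Hn; unfold ell. apply cont_plus; apply cont_mult; try apply cont_const; apply cont_coord; lia.
Qed.

Lemma pos_nbhd n F x : cont n F x -> F x > 0 -> exists r, r > 0 /\ forall y, close n x y r -> F y > 0.
Proof.
  intros HF Hx. destruct (HF (F x) Hx) as [r [Hr H]]. exists r; split; auto.
  intros y Hy; specialize (H y Hy). apply Rabs_def2 in H. lra.
Qed.

Lemma neg_nbhd n F x : cont n F x -> F x < 0 -> exists r, r > 0 /\ forall y, close n x y r -> F y < 0.
Proof.
  intros HF Hx. destruct (HF (- F x)) as [r [Hr H]]; [lra|]. exists r; split; auto.
  intros y Hy; specialize (H y Hy). apply Rabs_def2 in H. lra.
Qed.

Lemma fin_nbhd n x (P : nat -> (nat -> R) -> Prop) K :
  (forall j, (j < K)%nat -> exists r, r > 0 /\ forall y, close n x y r -> P j y) ->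
  exists r, r > 0 /\ forall y, close n x y r -> forall j, (j < K)%nat -> P j y.
Proof.
  induction K; intros H.
  - exists 1; split; [lra|]. intros; lia.
  - destruct IHK as [r1 [Hr1 H1]]; [intros; apply H; lia|].
    destruct (H K) as [r2 [Hr2 H2]]; [lia|].
    exists (Rmin r1 r2); split; [apply Rmin_pos; auto|].
    intros y Hy; apply close_min in Hy as [Hy1 Hy2]. intros j Hj.
    destruct (Nat.eq_dec j K) as [->|]; [apply H2; auto| apply H1; auto; lia].
Qed.

Lemma closure_ge n (S : set_Rn) F x : cont n F x -> (forall y, S y -> F y > 0) ->
  rn_closure n S x -> F x >= 0.
Proof.
  intros HF HS [_ Hc]. apply Rnot_lt_ge; intro Hlt.
  destruct (neg_nbhd n F x HF Hlt) as [r [Hr H]].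
  destruct (Hc r Hr) as [y [[_ Hy] Sy]].
  specialize (H y Hy). specialize (HS y Sy). lra.
Qed.

Lemma cont_ext n F G x : (forall y, F y = G y) -> cont n F x -> cont n G x.
Proof.
  intros He HF eps Heps. destruct (HF eps Heps) as [r [Hr H]]. exists r; split; auto.
  intros y Hy. rewrite <- !He. auto.
Qed.

Lemma cont_minus n F G x : cont n F x -> cont n G x -> cont n (fun y => F y - G y) x.
Proof.
  intros HF HG. apply (cont_ext n (fun y => F y + (-1) * G y)); [intros; ring|].
  apply cont_plus; auto. apply (cont_mult n (fun _ => -1) G); auto. apply cont_const.
Qed.

Definition sg (k j : nat) : R := if Nat.leb k j then 1 else -1.
Lemma sg_sq k j : sg k j * sg k j = 1.
Proof. unfold sg; destruct (Nat.leb k j); ring. Qed.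

Definition CsF n K k : set_Rn := fun y => inRn n y /\ RR K - nrm2 n y > 0 /\
  forall j, (j < K)%nat -> sg k j * ell j y > 0 /\ ell j y * ell j y - 1 - ee K * nrm2 n y > 0.

Lemma ee_pos K : ee K > 0.
Proof. unfold ee. apply Rinv_0_lt_compat. pose proof (pos_INR K). nra. Qed.

Lemma cont_F1 n K x : cont n (fun w => RR K - nrm2 n w) x.
Proof. apply cont_minus; [apply cont_const|apply cont_nrm2]. Qed.
Lemma cont_F2 n k j x : (2 <= n)%nat -> cont n (fun w => sg k j * ell j w) x.
Proof. intros; apply cont_mult; [apply cont_const|apply cont_ell; auto]. Qed.
Lemma cont_F3 n K j x : (2 <= n)%nat -> cont n (fun w => ell j w * ell j w - 1 - ee K * nrm2 n w) x.
Proof.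
  intros; apply cont_minus; [apply cont_minus|]; [apply cont_mult; apply cont_ell; auto|apply cont_const|].
  apply cont_mult; [apply cont_const|apply cont_nrm2].
Qed.

Lemma CsF_open n K k y : (2 <= n)%nat -> CsF n K k y ->
  exists r, r > 0 /\ forall w, rn_ball n y r w -> CsF n K k w.
Proof.
  intros Hn [Hy [H1 H2]].
  destruct (pos_nbhd n (fun w => RR K - nrm2 n w) y) as [r1 [Hr1 Hb1]]; auto.
  { apply cont_F1. }
  destruct (fin_nbhd n y (fun j w => sg k j * ell j w > 0 /\ ell j w * ell j w - 1 - ee K * nrm2 n w > 0) K)
    as [r2 [Hr2 Hb2]].
  { intros j Hj. destruct (H2 j Hj) as [Ha Hb].
    destruct (pos_nbhd n _ y (cont_F2 n k j y Hn) Ha) as [ra [Hra Ha']].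
    destruct (pos_nbhd n _ y (cont_F3 n K j y Hn) Hb) as [rb [Hrb Hb']].
    exists (Rmin ra rb); split; [apply Rmin_pos; auto|].
    intros w Hw; apply close_min in Hw as [Hw1 Hw2]; split; [apply Ha'|apply Hb']; auto. }
  exists (Rmin r1 r2); split; [apply Rmin_pos; auto|].
  intros w [Hw Hc]. apply close_min in Hc as [Hc1 Hc2].
  split; [auto|split; [apply Hb1; auto|apply Hb2; auto]].
Qed.

Lemma CsF_closure n K k x : (2 <= n)%nat -> rn_closure n (CsF n K k) x ->
  RR K - nrm2 n x >= 0 /\ forall j, (j < K)%nat ->
     sg k j * ell j x >= 0 /\ ell j x * ell j x - 1 - ee K * nrm2 n x >= 0.
Proof.
  intros Hn Hc. split.
  - apply (closure_ge n (CsF n K k) (fun w => RR K - nrm2 n w)); auto.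
    + apply cont_F1.
    + intros y [_ [H _]]; auto.
  - intros j Hj; split.
    + apply (closure_ge n (CsF n K k) (fun w => sg k j * ell j w)); auto.
      * apply cont_F2; auto.
      * intros y [_ [_ H]]; apply H; auto.
    + apply (closure_ge n (CsF n K k) (fun w => ell j w * ell j w - 1 - ee K * nrm2 n w)); auto.
      * apply cont_F3; auto.
      * intros y [_ [_ H]]; apply H; auto.
Qed.

Lemma no_zero n K k y : (2 <= n)%nat -> CsF n K k y -> ~ imag_proj n (fpoly n K) y.
Proof.
  intros Hn [Hy [H1 H2]] [_ [z [Hz HIm]]].
  unfold Im in HIm.
  assert (HY : nrm2 n (Yr z) = nrm2 n y).
  { unfold nrm2; apply rsum_ext; intros i Hi; unfold Yr; rewrite HIm; auto. }
  pose proof (nrm2_nonneg n (Xr z)) as HX.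
  pose proof (nrm2_nonneg n (Yr z)) as HY'.
  unfold fpoly in Hz; rewrite eval_pmul in Hz. apply Cmul_eq0 in Hz as [Hz|Hz].
  - rewrite eval_ballp in Hz. injection Hz; intros _ Hz1. lra.
  - destruct (prodh_zero _ _ _ _ Hz) as [j [Hj Hj0]].
    rewrite eval_hp in Hj0 by lia. injection Hj0; intros Hi Hr.
    assert (HL : ell j (Yr z) = ell j y).
    { unfold ell, Yr; rewrite !HIm by lia; reflexivity. }
    destruct (H2 j Hj) as [_ H3].
    apply (hyp_contra (ell j (Xr z)) (ell j (Yr z)) (nrm2 n (Xr z)) (nrm2 n (Yr z))
      (dot n (Xr z) (Yr z)) (ee K)); auto.
    + apply ee_pos.
    + apply CS.
    + rewrite HL, HY; exact H3.
Qed.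

Lemma bdry_zero n K y : (2 <= n)%nat -> inRn n y ->
  (RR K - nrm2 n y = 0 \/ exists j, (j < K)%nat /\ ell j y * ell j y - 1 - ee K * nrm2 n y = 0) ->
  imag_proj n (fpoly n K) y.
Proof.
  intros Hn Hy Hb. split; auto.
  set (z := fun i => (0, y i) : C). exists z. split; [|intros; reflexivity].
  assert (HX : nrm2 n (Xr z) = 0).
  { transitivity (rsum n (fun _ => 0 * 0)); [apply rsum_ext; intros; reflexivity|apply rsum_zero]. }
  assert (HD : dot n (Xr z) (Yr z) = 0).
  { transitivity (rsum n (fun _ => 0 * 0)); [apply rsum_ext; intros; unfold Xr; simpl; ring|apply rsum_zero]. }
  assert (HYz : Yr z = y) by reflexivity.
  unfold fpoly; rewrite eval_pmul. destruct Hb as [Hb|[j [Hj Hb]]].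
  - replace (eval_poly n (ballp n K) z) with C0; [apply Cmul_0_l|].
    rewrite eval_ballp, HX, HD, HYz. unfold C0; f_equal; lra.
  - rewrite (prodh_zero' n K K z j Hj); [apply Cmul_0_r|].
    rewrite eval_hp by lia. rewrite HX, HD, HYz.
    assert (HLx : ell j (Xr z) = 0) by (unfold ell, Xr; simpl; ring).
    rewrite HLx. unfold C0; f_equal; lra.
Qed.

Lemma closure_not_in n K k x : (2 <= n)%nat -> rn_closure n (CsF n K k) x -> ~ CsF n K k x ->
  imag_proj n (fpoly n K) x.
Proof.
  intros Hn Hc Hnot. destruct (CsF_closure n K k x Hn Hc) as [H1 H2].
  apply bdry_zero; auto. { destruct Hc; auto. }
  destruct (Req_dec (RR K - nrm2 n x) 0) as [E|E]; [left; auto|right].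
  apply NNPP; intro Hne. apply Hnot. split; [destruct Hc; auto|]. split; [lra|].
  intros j Hj. destruct (H2 j Hj) as [Ha Hb].
  assert (Hb' : ell j x * ell j x - 1 - ee K * nrm2 n x > 0).
  { destruct (Req_dec (ell j x * ell j x - 1 - ee K * nrm2 n x) 0) as [E'|E']; [|lra].
    exfalso; apply Hne; exists j; auto. }
  split; auto.
  destruct (Req_dec (sg k j * ell j x) 0) as [E'|E']; [|lra].
  exfalso. assert (ell j x * ell j x = 0).
  { replace (ell j x * ell j x) with ((sg k j * ell j x) * (sg k j * ell j x)).
    - rewrite E'; ring.
    - replace ((sg k j * ell j x) * (sg k j * ell j x)) with ((sg k j * sg k j) * (ell j x * ell j x)) by ring.
      rewrite sg_sq; ring. }
  pose proof (nrm2_nonneg n x). pose proof (ee_pos K). nra.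
Qed.

Lemma nrm2_comb n a b t : nrm2 n (comb a b t) =
  (1-t)*(1-t)*nrm2 n a + 2*(1-t)*t*dot n a b + t*t*nrm2 n b.
Proof. unfold nrm2 at 1; unfold comb; exact (expand2 n a b (1-t) t). Qed.

Lemma ell_comb j a b t : ell j (comb a b t) = (1-t)*ell j a + t*ell j b.
Proof. unfold ell, comb; ring. Qed.

Lemma inRn_comb n a b t : inRn n a -> inRn n b -> inRn n (comb a b t).
Proof. intros Ha Hb i Hi; unfold comb; rewrite Ha, Hb by auto; ring. Qed.

Lemma N_eq n a b : nrm2 n (fun i => 1 * a i + (-1) * b i) = nrm2 n a - 2 * dot n a b + nrm2 n b.
Proof. unfold nrm2 at 1. rewrite expand2. ring. Qed.

Lemma N_nonneg n a b : 0 <= nrm2 n a - 2 * dot n a b + nrm2 n b.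
Proof. rewrite <- N_eq. apply nrm2_nonneg. Qed.

Lemma N_pos n a b i : (i < n)%nat -> a i <> b i -> 0 < nrm2 n a - 2 * dot n a b + nrm2 n b.
Proof.
  intros Hi Hab. rewrite <- N_eq. unfold nrm2.
  eapply Rlt_le_trans; [|apply (rsum_ge_term n _ i); [intros; apply Rle_0_sqr|exact Hi]].
  simpl. assert (a i - b i <> 0) by lra. clear Hab. replace (1 * a i + -1 * b i) with (a i - b i) by ring. apply Rsqr_pos_lt; auto.
Qed.

Lemma sq_sg k j x : x * x = (sg k j * x) * (sg k j * x).
Proof.
  replace ((sg k j * x) * (sg k j * x)) with ((sg k j * sg k j) * (x * x)) by ring.
  rewrite sg_sq; ring.
Qed.

Lemma CsF_convex n K k : rn_convex n (CsF n K k).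
Proof.
  intros a b t [Ha [Ha1 Ha2]] [Hb [Hb1 Hb2]] Ht.
  pose proof (nrm2_nonneg n a); pose proof (nrm2_nonneg n b).
  pose proof (N_nonneg n a b). pose proof (CS n a b). pose proof (ee_pos K).
  split; [apply inRn_comb; auto|]. split.
  - rewrite nrm2_comb.
    assert (0 <= (1-t)*t*(nrm2 n a - 2 * dot n a b + nrm2 n b)) by
      (apply Rmult_le_pos; [apply Rmult_le_pos|]; lra).
    assert ((1-t)*nrm2 n a <= (1-t)*RR K) by (apply Rmult_le_compat_l; lra).
    assert (t*nrm2 n b <= t*RR K) by (apply Rmult_le_compat_l; lra).
    assert ((1-t)*nrm2 n a + t*nrm2 n b < RR K).
    { destruct (Req_dec t 0) as [->|Ht0].
      - lra.
      - assert (t*nrm2 n b < t*RR K) by (apply Rmult_lt_compat_l; lra). lra. }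
    replace ((1 - t) * (1 - t) * nrm2 n a + 2 * (1 - t) * t * dot n a b + t * t * nrm2 n b)
      with ((1-t)*nrm2 n a + t*nrm2 n b - (1-t)*t*(nrm2 n a - 2 * dot n a b + nrm2 n b)) by ring.
    lra.
  - intros j Hj. destruct (Ha2 j Hj) as [Hal Haq]. destruct (Hb2 j Hj) as [Hbl Hbq].
    rewrite ell_comb, nrm2_comb.
    rewrite (sq_sg k j (ell j a)) in Haq. rewrite (sq_sg k j (ell j b)) in Hbq.
    rewrite (sq_sg k j ((1 - t) * ell j a + t * ell j b)).
    replace (sg k j * ((1 - t) * ell j a + t * ell j b)) with
      ((1-t) * (sg k j * ell j a) + t * (sg k j * ell j b)) by ring.
    split.
    + destruct (Req_dec t 0); [subst; nra|]. nra.
    + apply key_ineq; auto; lra.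
Qed.

Lemma comb0 a b : comb a b 0 = a.
Proof. apply functional_extensionality; intros; unfold comb; ring. Qed.
Lemma comb1 a b : comb a b 1 = b.
Proof. apply functional_extensionality; intros; unfold comb; ring. Qed.

Lemma CsF_strict n K k : (2 <= n)%nat -> rn_strictly_convex n (CsF n K k).
Proof.
  intros Hn. split; [apply CsF_convex|].
  intros [a [b [Ha [Hb [[i [Hi Hab]] Hbd]]]]].
  destruct (Hbd 0) as [Hca _]; [lra|]. rewrite comb0 in Hca.
  destruct (Hbd 1) as [Hcb _]; [lra|]. rewrite comb1 in Hcb.
  destruct (Hbd (1/2)) as [_ Hnint]; [lra|].
  apply Hnint.
  assert (Hm : CsF n K k (comb a b (1/2))).
  { destruct (CsF_closure n K k a Hn Hca) as [Ha1 Ha2].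
    destruct (CsF_closure n K k b Hn Hcb) as [Hb1 Hb2].
    pose proof (nrm2_nonneg n a); pose proof (nrm2_nonneg n b).
    pose proof (N_pos n a b i Hi Hab). pose proof (CS n a b). pose proof (ee_pos K).
    split; [apply inRn_comb; auto|]. split.
    - rewrite nrm2_comb. lra.
    - intros j Hj. destruct (Ha2 j Hj) as [Hal Haq]. destruct (Hb2 j Hj) as [Hbl Hbq].
      rewrite ell_comb, nrm2_comb.
      rewrite (sq_sg k j (ell j a)) in Haq. rewrite (sq_sg k j (ell j b)) in Hbq.
      rewrite (sq_sg k j ((1 - 1/2) * ell j a + 1/2 * ell j b)).
      replace (sg k j * ((1 - 1/2) * ell j a + 1/2 * ell j b)) with
        ((sg k j * ell j a + sg k j * ell j b) / 2) by field.
      pose proof (key_mid (sg k j * ell j a) (sg k j * ell j b) (nrm2 n a) (nrm2 n b) (dot n a b) (ee K))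
        as Hk.
      assert (Hk' : (sg k j * ell j a + sg k j * ell j b) / 2 * ((sg k j * ell j a + sg k j * ell j b) / 2) - 1 -
         ee K * ((1 - 1 / 2) * (1 - 1 / 2) * nrm2 n a + 2 * (1 - 1 / 2) * (1 / 2) * dot n a b + 1 / 2 * (1 / 2) * nrm2 n b) > 0).
      { replace ((1 - 1 / 2) * (1 - 1 / 2) * nrm2 n a + 2 * (1 - 1 / 2) * (1 / 2) * dot n a b + 1 / 2 * (1 / 2) * nrm2 n b)
          with (nrm2 n a / 4 + 2 * dot n a b / 4 + nrm2 n b / 4) by field.
        apply Hk; auto; lra. }
      split; [|exact Hk'].
      assert (0 <= ee K * ((1 - 1 / 2) * (1 - 1 / 2) * nrm2 n a + 2 * (1 - 1 / 2) * (1 / 2) * dot n a b + 1 / 2 * (1 / 2) * nrm2 n b)).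
      { apply Rmult_le_pos; [lra|]. rewrite <- nrm2_comb. apply nrm2_nonneg. }
      set (m := (sg k j * ell j a + sg k j * ell j b) / 2) in *.
      assert (0 <= m) by (unfold m; lra).
      destruct (Req_dec m 0) as [E|E]; [rewrite E in Hk'; lra| lra]. }
  split; [destruct Hm; auto|]. apply CsF_open; auto.
Qed.

Lemma rsum_abs_bound n g i : (i < n)%nat -> Rabs (g i) <= rsum n (fun j => Rabs (g j)).
Proof. intros Hi. apply (rsum_ge_term n (fun j => Rabs (g j)) i); [intros; apply Rabs_pos|auto]. Qed.

Lemma near_comb n a b w r : r > 0 -> inRn n a -> inRn n b ->
  exists d, d > 0 /\ forall u, Rabs (u - w) < d -> rn_ball n (comb a b w) r (comb a b u).
Proof.
  intros Hr Ha Hb.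
  set (M := rsum n (fun j => Rabs (b j - a j)) + 1).
  assert (HM0 : 0 <= rsum n (fun j => Rabs (b j - a j))) by (apply rsum_nonneg; intros; apply Rabs_pos).
  assert (HM : M > 0) by (unfold M; lra).
  exists (r / M); split; [apply Rdiv_lt_0_compat; auto|].
  intros u Hu. split; [apply inRn_comb; auto|]. intros i Hi.
  replace (comb a b u i - comb a b w i) with ((u - w) * (b i - a i)) by (unfold comb; ring).
  rewrite Rabs_mult.
  pose proof (rsum_abs_bound n (fun j => b j - a j) i Hi) as Hbd.
  assert (Rabs (b i - a i) <= M) by (unfold M; simpl in Hbd; lra).
  pose proof (Rabs_pos (u - w)). pose proof (Rabs_pos (b i - a i)).
  assert (Rabs (u - w) * Rabs (b i - a i) <= Rabs (u - w) * M) by (apply Rmult_le_compat_l; lra).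
  assert (Rabs (u - w) * M < r / M * M) by (apply Rmult_lt_compat_r; lra).
  replace (r / M * M) with r in * by (field; lra). lra.
Qed.

Lemma convex_connected n (S : set_Rn) : (forall x, S x -> inRn n x) -> rn_convex n S -> rn_connected n S.
Proof.
  intros Hin Hcv [U [V [HU [HV [Hcov [[a [Sa Ua]] [[b [Sb Vb]] Hdis]]]]]]].
  assert (Ha := Hin a Sa). assert (Hb := Hin b Sb).
  set (E := fun t => 0 <= t <= 1 /\ forall u, 0 <= u <= t -> U (comb a b u)).
  assert (E0 : E 0).
  { split; [lra|]. intros u Hu. replace u with 0 by lra. rewrite comb0; auto. }
  destruct (completeness E) as [s [Hub Hlub]].
  { exists 1. intros t [Ht _]; lra. }
  { exists 0; auto. }
  assert (Hs0 : 0 <= s) by (apply Hub; auto).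
  assert (Hs1 : s <= 1) by (apply Hlub; intros t [Ht _]; lra).
  assert (below : forall u, 0 <= u < s -> U (comb a b u)).
  { intros u Hu. apply NNPP; intro HnU.
    assert (s <= u); [|lra]. apply Hlub. intros t [Ht Htu].
    destruct (Rle_or_lt t u) as [|Hlt]; auto. exfalso; apply HnU, Htu; lra. }
  assert (Sc : S (comb a b s)) by (apply Hcv; auto).
  destruct (Hcov _ Sc) as [Us|Vs].
  - destruct (HU _ Us) as [r [Hr Hball]].
    destruct (near_comb n a b s r Hr Ha Hb) as [d [Hd Hnear]].
    destruct (Req_dec s 1) as [E1|E1].
    + rewrite E1, comb1 in Us. apply (Hdis b); auto.
    + set (t' := Rmin 1 (s + d/2)).
      assert (Et' : E t').
      { split; [unfold t'; split; [apply Rmin_glb; lra|apply Rmin_l]|].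
        intros u Hu. destruct (Rlt_or_le u s) as [Hlt|Hge]; [apply below; lra|].
        apply Hball, Hnear. assert (u <= s + d/2) by (pose proof (Rmin_r 1 (s + d/2)); unfold t' in Hu; lra).
        apply Rabs_def1; lra. }
      assert (t' <= s) by (apply Hub; auto).
      assert (t' > s); [|lra].
      unfold t'. unfold Rmin; destruct (Rle_dec 1 (s + d/2)); lra.
  - destruct (Req_dec s 0) as [E0'|E0'].
    + rewrite E0', comb0 in Vs. apply (Hdis a); auto.
    + destruct (HV _ Vs) as [r [Hr Hball]].
      destruct (near_comb n a b s r Hr Ha Hb) as [d [Hd Hnear]].
      set (u := Rmax 0 (s - d/2)).
      assert (Hu0 : 0 <= u) by apply Rmax_l.
      assert (Hus : u < s) by (unfold u, Rmax; destruct (Rle_dec 0 (s - d/2)); lra).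
      assert (Hud : Rabs (u - s) < d).
      { apply Rabs_def1; unfold u, Rmax; destruct (Rle_dec 0 (s - d/2)); lra. }
      apply (Hdis (comb a b u)).
      * apply Hcv; auto; lra.
      * apply below; lra.
      * apply Hball, Hnear; auto.
Qed.

Lemma CsF_component n K k : (2 <= n)%nat -> (exists x, CsF n K k x) ->
  rn_component n (compl_imag_proj n (fpoly n K)) (CsF n K k).
Proof.
  intros Hn Hne. split; [auto|]. split.
  { intros x Hx. split; [destruct Hx; auto|]. apply (no_zero n K k); auto. }
  split.
  { apply convex_connected; [intros x Hx; destruct Hx; auto|apply CsF_convex]. }
  intros T HT Hsub HTS x Tx. apply NNPP; intro Hx. apply HT.
  set (V := fun y => exists r, r > 0 /\ forall w, rn_ball n y r w -> ~ CsF n K k w).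
  assert (Hcov : forall y, T y -> CsF n K k y \/ V y).
  { intros y Ty. destruct (classic (CsF n K k y)) as [|Hny]; [left; auto|right].
    apply NNPP; intro HnV. destruct (HTS y Ty) as [Hy Hni]. apply Hni.
    apply (closure_not_in n K k); auto. split; auto.
    intros r Hr. apply NNPP; intro Hno. apply HnV. exists r; split; auto.
    intros w Hw Hc. apply Hno. exists w; auto. }
  exists (CsF n K k), V. split; [|split; [|split; [|split; [|split]]]].
  - intros y Hy. apply CsF_open; auto.
  - intros y [r [Hr Hb]]. exists (r/2); split; [lra|].
    intros w [Hw Hwc]. exists (r/2); split; [lra|].
    intros w' [Hw' Hw'c]. apply Hb. split; auto. intros i Hi.
    specialize (Hwc i Hi); specialize (Hw'c i Hi).
    replace (w' i - y i) with ((w' i - w i) + (w i - y i)) by ring.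
    pose proof (Rabs_triang (w' i - w i) (w i - y i)). lra.
  - exact Hcov.
  - destruct Hne as [y Hy]. exists y; split; auto.
  - exists x; split; auto. destruct (Hcov x Tx); [contradiction|auto].
  - intros y _ Hy [r [Hr Hb]]. apply (Hb y); auto. split; [destruct Hy; auto|].
    intros i Hi. rewrite Rminus_diag, Rabs_R0; auto.
Qed.

Lemma CsF_bounded n K k : rn_bounded n (CsF n K k).
Proof.
  exists (RR K). intros y [_ [H1 _]] i Hi.
  assert (y i * y i <= nrm2 n y) by (apply (rsum_ge_term n (fun j => y j * y j) i); [intros; nra|auto]).
  assert (RR K >= 1) by (unfold RR; pose proof (pos_INR K); nra).
  apply Rabs_le; split; apply Rnot_lt_le; intro Hc.
  - assert (RR K * RR K < (- y i) * (- y i)) by (apply Rmult_le_0_lt_compat; lra).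
    assert (RR K <= RR K * RR K) by (apply Rle_trans with (RR K * 1); [lra| apply Rmult_le_compat_l; lra]). lra.
  - assert (RR K * RR K < y i * y i) by (apply Rmult_le_0_lt_compat; lra).
    assert (RR K <= RR K * RR K) by (apply Rle_trans with (RR K * 1); [lra| apply Rmult_le_compat_l; lra]). lra.
Qed.

Definition pk (k : nat) : nat -> R := fun i =>
  match i with O => 2 | 1%nat => 2 * INR k | _ => 0 end.

Lemma rsum_two m g : (2 <= m)%nat -> (forall i, (2 <= i)%nat -> g i = 0) -> rsum m g = g O + g 1%nat.
Proof.
  intros Hm Hg. revert Hm. induction m; intros Hm; [lia|].
  destruct (Nat.eq_dec m 1) as [->|Hne]; [simpl; ring|].
  simpl. rewrite IHm by lia. rewrite (Hg m) by lia. ring.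
Qed.

Lemma ee_eq K : ee K * (2 * (1 + INR K * INR K)) = 1.
Proof. unfold ee. apply Rinv_l. pose proof (pos_INR K). nra. Qed.

Lemma pk_in n K k : (2 <= n)%nat -> (k < K)%nat -> CsF n K k (pk k).
Proof.
  intros Hn Hk.
  assert (HN : nrm2 n (pk k) = 4 + 4 * (INR k * INR k)).
  { unfold nrm2. rewrite rsum_two; auto. - simpl; ring. - intros i Hi; destruct i as [|[|i]]; simpl; lia || ring. }
  assert (HkK : INR k + 1 <= INR K) by (rewrite <- S_INR; apply le_INR; lia).
  pose proof (pos_INR k).
  assert (Hsq : INR k * INR k <= INR K * INR K) by nra.
  split; [|split].
  - intros i Hi. destruct i as [|[|i]]; [lia|lia|reflexivity].
  - rewrite HN. unfold RR. lra.
  - intros j Hj. rewrite HN. unfold ell, la, pk.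
    assert (Hsv : sg k j * (2 * INR j + 1) * 2 + sg k j * (-2 * (2 * INR k)) >= 2).
    { unfold sg. destruct (Nat.leb_spec k j) as [Hl|Hl].
      - assert (INR k <= INR j) by (apply le_INR; auto). lra.
      - assert (INR j + 1 <= INR k) by (rewrite <- S_INR; apply le_INR; lia). lra. }
    assert (Hl2 : (2 * INR j + 1) * 2 + -2 * (2 * INR k) = sg k j * ((2 * INR j + 1) * 2 + -2 * (2 * INR k)) * sg k j).
    { replace (sg k j * ((2 * INR j + 1) * 2 + -2 * (2 * INR k)) * sg k j) with
        ((sg k j * sg k j) * ((2 * INR j + 1) * 2 + -2 * (2 * INR k))) by ring. rewrite sg_sq; ring. }
    set (L := (2 * INR j + 1) * 2 + -2 * (2 * INR k)) in *.
    assert (HsL : sg k j * L >= 2) by (unfold L; lra).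
    split; [lra|].
    assert (HLL : L * L >= 4).
    { rewrite (sq_sg k j L). nra. }
    pose proof (ee_eq K). pose proof (ee_pos K).
    assert (ee K * (4 + 4 * (INR k * INR k)) <= 2).
    { assert (ee K * (4 + 4 * (INR k * INR k)) <= ee K * (4 + 4 * (INR K * INR K))) by
        (apply Rmult_le_compat_l; lra). nra. }
    lra.
Qed.

Lemma CsF_disj n K k l x : (k < K)%nat -> (l < K)%nat -> k <> l -> CsF n K k x -> CsF n K l x -> False.
Proof.
  intros Hk Hl Hkl [_ [_ Hx]] [_ [_ Hy]].
  destruct (Nat.lt_ge_cases k l) as [Hlt|Hgt].
  - destruct (Hx k Hk) as [A _]. destruct (Hy k Hk) as [B _].
    unfold sg in A, B. destruct (Nat.leb_spec k k); [|lia]. destruct (Nat.leb_spec l k); [lia|]. lra.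
  - destruct (Hx l Hl) as [A _]. destruct (Hy l Hl) as [B _].
    unfold sg in A, B. destruct (Nat.leb_spec l l); [|lia]. destruct (Nat.leb_spec k l); [lia|]. lra.

Qed.

Theorem theorem1p3 (n : nat) (hn : (2 <= n)%nat) (K : nat) (hK : (0 < K)%nat) :
  exists f : mpoly,
  exists Cs : nat -> set_Rn,
    (forall k, (k < K)%nat ->
       rn_component n (compl_imag_proj n f) (Cs k) /\
       rn_bounded n (Cs k) /\ rn_strictly_convex n (Cs k)) /\
    (forall k l, (k < K)%nat -> (l < K)%nat -> k <> l ->
       forall x, Cs k x -> Cs l x -> False).
Proof.
  exists (fpoly n K), (CsF n K). split.
  - intros k Hk. split; [|split].
    + apply CsF_component; auto. exists (pk k). apply pk_in; auto.
    + apply CsF_bounded.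
    + apply CsF_strict; auto.
  - intros k l Hk Hl Hkl x. apply CsF_disj; auto.
Qed.
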